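(* Let $H_1\in\mathbb{H}^{n\times n}$ and $H_2\in\mathbb{H}^{m\times m}$ be invertible Hermitian quaternion matrices defining indefinite inner products $[x,y]_1=y^*H_1x$ on $\mathbb{H}^n$ and $[x,y]_2=y^*H_2x$ on $\mathbb{H}^m$. Let $X,Y:\mathbb{H}^n\to\mathbb{H}^m$ be linear transformations (i.e. $X,Y\in\mathbb{H}^{m\times n}$). Then $Y$ can be written in the form $Y=UX$, where $U$ is an injective $H_2$-isometry from $\mathrm{Im}\,X$ to $\mathrm{Im}\,Y$, if and only if both $$Y^{[*]}Y=X^{[*]}X\qquad\text{and}\qquad \mathrm{Ker}\,X=\mathrm{Ker}\,Y$$ hold.
   Context: $\mathbb{H}$ denotes the real quaternions; $\mathbb{H}^n$ is regarded as a right vector space over $\mathbb{H}$ (scalars multiply from the right), and matrices act on column vectors by left multiplication. For a quaternion matrix $A$, $A^*$ is its conjugate transpose; $A$ is Hermitian if $A^*=A$. For $X:\mathbb{H}^n\to\mathbb{H}^m$, the $H_1$-$H_2$-adjoint $X^{[*]}:\mathbb{H}^m\to\mathbb{H}^n$ is defined by $[X^{[*]}y,x]_1=[y,Xx]_2$ for all $x,y$; equivalently $X^{[*]}=H_1^{-1}X^*H_2$ (and similarly for $Y$). For subspaces $V,W\subseteq\mathbb{H}^m$, a linear map $U:V\to W$ is an $H_2$-isometry if $[Ux,Uy]_2=[x,y]_2$ for all $x,y\in V$. *)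

(* Defs.v *)
From HB Require Import structures.
From mathcomp Require Import all_boot all_order all_algebra.
From mathcomp Require Import ring.
From mathcomp Require Import reals.
Set Implicit Arguments. Unset Strict Implicit. Unset Printing Implicit Defensive.
Import Order.TTheory GRing.Theory Num.Theory.
Local Open Scope ring_scope.

Section Quaternions.
Variable R : realType.

(* q = a + b i + c j + d k *)
Record quat := Quat { qa : R; qb : R; qc : R; qd : R }.

Definition quat2tup (q : quat) := (qa q, qb q, qc q, qd q).
Definition tup2quat (t : R * R * R * R) :=
  let: (a, b, c, d) := t in Quat a b c d.
Lemma quat2tupK : cancel quat2tup tup2quat. Proof. by case. Qed.

HB.instance Definition _ := Equality.copy quat (can_type quat2tupK).
HB.instance Definition _ := Choice.copy quat (can_type quat2tupK).

Definition qzero := Quat 0 0 0 0.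
Definition qone := Quat 1 0 0 0.
Definition qadd p q := Quat (qa p + qa q) (qb p + qb q) (qc p + qc q) (qd p + qd q).
Definition qopp p := Quat (- qa p) (- qb p) (- qc p) (- qd p).
(* Hamilton product: i^2 = j^2 = k^2 = ijk = -1 *)
Definition qmul p q := Quat
  (qa p * qa q - qb p * qb q - qc p * qc q - qd p * qd q)
  (qa p * qb q + qb p * qa q + qc p * qd q - qd p * qc q)
  (qa p * qc q - qb p * qd q + qc p * qa q + qd p * qb q)
  (qa p * qd q + qb p * qc q - qc p * qb q + qd p * qa q).
Definition qconj p := Quat (qa p) (- qb p) (- qc p) (- qd p).

Lemma qaddA : associative qadd.
Proof. by case=> ? ? ? ?; case=> ? ? ? ?; case=> ? ? ? ?; rewrite /qadd /=; congr Quat; ring. Qed.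
Lemma qaddC : commutative qadd.
Proof. by case=> ? ? ? ?; case=> ? ? ? ?; rewrite /qadd /=; congr Quat; ring. Qed.
Lemma qadd0 : left_id qzero qadd.
Proof. by case=> ? ? ? ?; rewrite /qadd /=; congr Quat; ring. Qed.
Lemma qaddN : left_inverse qzero qopp qadd.
Proof. by case=> ? ? ? ?; rewrite /qadd /=; congr Quat; ring. Qed.

HB.instance Definition _ := GRing.isZmodule.Build quat qaddA qaddC qadd0 qaddN.

Lemma qmulA : associative qmul.
Proof. by case=> ? ? ? ?; case=> ? ? ? ?; case=> ? ? ? ?; rewrite /qmul /=; congr Quat; ring. Qed.
Lemma qmul1 : left_id qone qmul.
Proof. by case=> ? ? ? ?; rewrite /qmul /=; congr Quat; ring. Qed.
Lemma qmulr1 : right_id qone qmul.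
Proof. by case=> ? ? ? ?; rewrite /qmul /=; congr Quat; ring. Qed.
Lemma qmulDl : left_distributive qmul qadd.
Proof. by case=> ? ? ? ?; case=> ? ? ? ?; case=> ? ? ? ?; rewrite /qmul /= /qadd /=; congr Quat; ring. Qed.
Lemma qmulDr : right_distributive qmul qadd.
Proof. by case=> ? ? ? ?; case=> ? ? ? ?; case=> ? ? ? ?; rewrite /qmul /= /qadd /=; congr Quat; ring. Qed.
Lemma qone_neq0 : qone != (0 : quat).
Proof. apply/eqP => /(congr1 qa) /= /eqP; by rewrite oner_eq0. Qed.

HB.instance Definition _ :=
  GRing.Zmodule_isNzRing.Build quat qmulA qmul1 qmulr1 qmulDl qmulDr qone_neq0.

End Quaternions.

Definition cT (R : realType) m n (A : 'M[quat R]_(m, n)) : 'M[quat R]_(n, m) :=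
  map_mx (@qconj R) A^T.

Definition qhermitian (R : realType) n (A : 'M[quat R]_n) : Prop := cT A = A.

(* right scalar multiplication on column vectors of H^n (right vector space) *)
Definition rscale (R : realType) n (v : 'cV[quat R]_n) (a : quat R) : 'cV[quat R]_n :=
  map_mx (fun x => x * a) v.

Definition ip (R : realType) n (H : 'M[quat R]_n) (x y : 'cV[quat R]_n) : 'M[quat R]_1 :=
  cT y *m H *m x.

(* H1-H2-adjoint X^[*] = H1^{-1} X^* H2, where H1i is the inverse of H1 *)
Definition hadj (R : realType) m n (H1i : 'M[quat R]_n) (H2 : 'M[quat R]_m)
  (X : 'M[quat R]_(m, n)) : 'M[quat R]_(n, m) := H1i *m cT X *m H2.

Definition Im (R : realType) m n (X : 'M[quat R]_(m, n)) (w : 'cV[quat R]_m) : Prop :=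
  exists v : 'cV[quat R]_n, w = X *m v.
Definition Ker (R : realType) m n (X : 'M[quat R]_(m, n)) (v : 'cV[quat R]_n) : Prop :=
  X *m v = 0.

Definition inj_isometry (R : realType) m (H : 'M[quat R]_m)
  (V W : 'cV[quat R]_m -> Prop) (U : 'cV[quat R]_m -> 'cV[quat R]_m) : Prop :=
  [/\ (forall x, V x -> W (U x)),
      (forall x y, V x -> V y -> U (x + y) = U x + U y),
      (forall x a, V x -> U (rscale x a) = rscale (U x) a),
      (forall x y, V x -> V y -> U x = U y -> x = y) &
      (forall x y, V x -> V y -> ip H (U x) (U y) = ip H x y)].

(* Main.v *)
Require Import Defs.
From HB Require Import structures.
From mathcomp Require Import all_boot all_order all_algebra.
From mathcomp Require Import reals ring.
From Stdlib Require Import ClassicalEpsilon.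
Import GRing.Theory.
Local Open Scope ring_scope.
Section S.
Variable R : realType.
Lemma qconjM (p q : quat R) : qconj (p * q) = qconj q * qconj p.
Proof. case: p => a b c d; case: q => e f g h. rewrite /GRing.mul /= /qmul /qconj /=; congr Quat; ring. Qed.
Lemma qconjD (p q : quat R) : qconj (p + q) = qconj p + qconj q.
Proof. case: p => a b c d; case: q => e f g h. rewrite /GRing.add /= /qadd /qconj /=; congr Quat; ring. Qed.
Lemma qconj0 : qconj (0 : quat R) = 0.
Proof. have -> : (0 : quat R) = qzero R by []. by rewrite /qconj /qzero /= oppr0. Qed.
Lemma qconj1 : qconj (1 : quat R) = 1.
Proof. have -> : (1 : quat R) = qone R by []. by rewrite /qconj /qone /= oppr0. Qed.

Lemma cT_mul m n p (A : 'M[quat R]_(m, n)) (B : 'M[quat R]_(n, p)) :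
  cT (A *m B) = cT B *m cT A.
Proof.
apply/matrixP => i j; rewrite !mxE (big_morph (@qconj R) qconjD qconj0).
by apply: eq_bigr => k _; rewrite !mxE qconjM.
Qed.

Lemma cT_delta n (i : 'I_n) : cT (delta_mx i 0 : 'cV[quat R]_n) = delta_mx 0 i.
Proof.
apply/matrixP => a b; rewrite !mxE andbC.
by case: (_ && _); rewrite ?mulr1n ?mulr0n ?qconj1 ?qconj0.
Qed.

Lemma rscale_mul m n (A : 'M[quat R]_(m, n)) v a :
  A *m rscale v a = rscale (A *m v) a.
Proof.
apply/matrixP => i j; rewrite !mxE mulr_suml.
by apply: eq_bigr => k _; rewrite !mxE mulrA.
Qed.

Lemma entry_eq n (M N : 'M[quat R]_n) :
  (forall v w : 'cV[quat R]_n, cT w *m M *m v = cT w *m N *m v) -> M = N.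
Proof.
move=> H; apply/matrixP => i j.
have := H (delta_mx j 0) (delta_mx i 0).
rewrite cT_delta -!rowE -!colE => /matrixP /(_ 0 0).
by rewrite !mxE.
Qed.
End S.

Theorem lemma4p1 (R : realType) (m n : nat)
  (H1 H1i : 'M[quat R]_n) (H2 H2i : 'M[quat R]_m)
  (X Y : 'M[quat R]_(m, n)) :
  qhermitian H1 -> qhermitian H2 ->
  H1i *m H1 = 1%:M -> H1 *m H1i = 1%:M ->
  H2i *m H2 = 1%:M -> H2 *m H2i = 1%:M ->
  (exists U : 'cV[quat R]_m -> 'cV[quat R]_m,
      inj_isometry H2 (Im X) (Im Y) U /\ (forall v, Y *m v = U (X *m v)))
  <->
  (hadj H1i H2 Y *m Y = hadj H1i H2 X *m X /\ (forall v, Ker X v <-> Ker Y v)).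
Proof.
move=> _ _ H1iH1 H1H1i H2iH2 H2H2i.
have EZ : forall Z : 'M[quat R]_(m, n), forall v w,
    cT w *m (cT Z *m H2 *m Z) *m v = ip H2 (Z *m v) (Z *m w).
  by move=> Z v w; rewrite /ip cT_mul !mulmxA.
split.
- case=> U [[UW Uadd Usc Uinj Uiso] HU].
  have V0 : Im X 0 by exists 0; rewrite mulmx0.
  have U0 : U 0 = 0.
    have := Uadd 0 0 V0 V0; rewrite addr0.
    by move/(congr1 (fun z => z - U 0)); rewrite addrK subrr.
  split.
  + have G : cT Y *m H2 *m Y = cT X *m H2 *m X.
      apply: entry_eq => v w; rewrite !EZ !HU Uiso //.
      * by exists v.
      * by exists w.
    by move: G; rewrite /hadj -!mulmxA => ->.
  + move=> v; rewrite /Ker; split => Hv.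
    * by rewrite HU Hv U0.
    * apply: Uinj => //; first by exists v.
      by rewrite -HU Hv U0.
- case=> [G K].
  have G' : cT Y *m H2 *m Y = cT X *m H2 *m X.
    by move: (congr1 (mulmx H1) G); rewrite /hadj !mulmxA H1H1i !mul1mx.
  have wd : forall (A B : 'M[quat R]_(m, n)), (forall v : 'cV[quat R]_n, A *m v = 0 -> B *m v = 0) ->
      forall a b : 'cV[quat R]_n, A *m a = A *m b -> B *m a = B *m b.
    move=> A B HAB a b /eqP; rewrite -subr_eq0 -mulmxBr => /eqP /HAB.
    by move/eqP; rewrite mulmxBr subr_eq0 => /eqP.
  have wdXY := wd X Y (fun v => proj1 (K v)).
  have wdYX := wd Y X (fun v => proj2 (K v)).
  pose U (w : 'cV[quat R]_m) : 'cV[quat R]_m := Y *m epsilon (inhabits 0) (fun v => w = X *m v).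
  have UX : forall a : 'cV[quat R]_n, U (X *m a) = Y *m a.
    move=> a; rewrite /U; apply: wdXY.
    by rewrite -(epsilon_spec (inhabits 0) (fun v => X *m a = X *m v) (ex_intro _ a erefl)).
  exists U; split; last by move=> v; rewrite UX.
  split.
  + by move=> x [a ->]; rewrite UX; exists a.
  + by move=> x y [a ->] [b ->]; rewrite -mulmxDr !UX mulmxDr.
  + by move=> x q [a ->]; rewrite -rscale_mul !UX rscale_mul.
  + by move=> x y [a ->] [b ->]; rewrite !UX => /wdYX.
  + move=> x y [a ->] [b ->]; rewrite !UX /ip !cT_mul -!mulmxA.
    by congr (_ *m _); rewrite !mulmxA G'.
Qed.
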